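(* Let $\mathbf{A}=(\mathcal{P},\mathcal{L},\parallel)$ and $\mathbf{A}'=(\mathcal{P}',\mathcal{L}',\parallel')$ be affine spaces with $\dim\mathbf{A}'\ge 3$, and let $\varphi:\mathcal{L}\to\mathcal{L}'$ be a bijection satisfying $a\sim b\implies a^\varphi\sim' b^\varphi$ for all $a,b\in\mathcal{L}$. Let $\lambda:\mathcal{P}\to\mathcal{P}'$ be the (well-defined) map $a\cap b\mapsto a^\varphi\cap b^\varphi$ for adjacent $a,b\in\mathcal{L}$. Then $\dim\mathbf{A}\ge 3$. If moreover the order of $\mathbf{A}$ is not two, then for every $Q\in\mathcal{P}$ the restriction $$\varphi|_{\mathcal{L}(Q)}:\mathcal{L}(Q)\to\mathcal{L}'(Q^\lambda)$$ is a semicollineation of the projective space $\mathbf{A}/Q$ onto the projective space $\mathbf{A}'/Q^\lambda$.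
   Context: An affine space $\mathbf{A}=(\mathcal{P},\mathcal{L},\parallel)$ has point set $\mathcal{P}$, line set $\mathcal{L}$ and parallelism $\parallel$; its order is the number of points on a line. Lines $a,b$ are related, $a\sim b$, if $a\cap b\ne\emptyset$; adjacent, $a\approx b$, if related and distinct; analogously $\sim'$ in $\mathbf{A}'$. $\mathcal{L}(Q)$ is the set of lines through the point $Q$. For a plane $\mathcal{E}$ containing $Q$, $\mathcal{L}(Q,\mathcal{E})$ is the pencil of lines in $\mathcal{E}$ through $Q$. The projective space $\mathbf{A}/Q$ has point set $\mathcal{L}(Q)$ and line set $\{\mathcal{L}(Q,\mathcal{E}) : \mathcal{E}\text{ a plane with } Q\in\mathcal{E}\}$; similarly $\mathbf{A}'/Q'$. A semicollineation of projective spaces is a bijection between their point sets taking any three collinear points to collinear points. *)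

(* Defs.v *)
Record affine_space := AffineSpace {
  pt : Type;
  ln : Type;
  inc : pt -> ln -> Prop;
  par : ln -> ln -> Prop;
  ax_line_ext : forall l m, (forall p, inc p l <-> inc p m) -> l = m;
  ax_line_two : forall l, exists p q, p <> q /\ inc p l /\ inc q l;
  ax_join : forall p q, p <> q -> exists l, inc p l /\ inc q l;
  ax_join_uniq : forall p q l m, p <> q ->
      inc p l -> inc q l -> inc p m -> inc q m -> l = m;
  ax_par_refl : forall l, par l l;
  ax_par_sym : forall l m, par l m -> par m l;
  ax_par_trans : forall l m n, par l m -> par m n -> par l n;
  ax_euclid : forall p l, exists m, inc p m /\ par m l;
  ax_euclid_uniq : forall p l m1 m2,
      inc p m1 -> par m1 l -> inc p m2 -> par m2 l -> m1 = m2;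
  ax_triangle : forall a b c a' b' lab lac lbc la'b' m1 m2,
      ~ (exists l, inc a l /\ inc b l /\ inc c l) ->
      inc a lab -> inc b lab -> inc a lac -> inc c lac ->
      inc b lbc -> inc c lbc ->
      a' <> b' -> inc a' la'b' -> inc b' la'b' -> par la'b' lab ->
      inc a' m1 -> par m1 lac -> inc b' m2 -> par m2 lbc ->
      exists p, inc p m1 /\ inc p m2;
  ax_three : exists a b c, ~ (exists l, inc a l /\ inc b l /\ inc c l)
}.

Arguments inc {A} p l : rename.
Arguments par {A} l m : rename.

Section AffineNotions.
Variable A : affine_space.

Definition noncollinear (a b c : pt A) : Prop :=
  ~ (exists l : ln A, inc a l /\ inc b l /\ inc c l).

Definition related (a b : ln A) : Prop := exists p : pt A, inc p a /\ inc p b.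

Definition adjacent (a b : ln A) : Prop := related a b /\ a <> b.

Definition line_in (S : pt A -> Prop) (l : ln A) : Prop :=
  forall p, inc p l -> S p.

Definition subspace (S : pt A -> Prop) : Prop :=
  (forall p q l, p <> q -> S p -> S q -> inc p l -> inc q l -> line_in S l) /\
  (forall l m p, line_in S l -> S p -> inc p m -> par m l -> line_in S m).

Definition in_span (X : pt A -> Prop) (p : pt A) : Prop :=
  forall S, subspace S -> (forall x, X x -> S x) -> S p.

Definition triple (a b c : pt A) : pt A -> Prop :=
  fun x => x = a \/ x = b \/ x = c.

Definition plane (E : pt A -> Prop) : Prop :=
  exists a b c, noncollinear a b c /\
    forall p, E p <-> in_span (triple a b c) p.

Definition dim_ge3 : Prop :=
  exists a b c d, noncollinear a b c /\ ~ in_span (triple a b c) d.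

Definition order_two : Prop :=
  forall l : ln A, exists p q, p <> q /\ inc p l /\ inc q l /\
    forall r, inc r l -> r = p \/ r = q.

(* collinearity of three points (lines through Q) in A/Q:
   they belong to a common pencil L(Q, E) for a plane E through Q *)
Definition collinear_at (Q : pt A) (a b c : ln A) : Prop :=
  exists E, plane E /\ E Q /\ line_in E a /\ line_in E b /\ line_in E c.

End AffineNotions.

Arguments noncollinear {A} a b c.
Arguments related {A} a b.
Arguments adjacent {A} a b.
Arguments collinear_at {A} Q a b c.

Definition semicollineation_at (A A' : affine_space) (f : ln A -> ln A')
    (Q : pt A) (Q' : pt A') : Prop :=
  (forall l, inc Q l -> inc Q' (f l)) /\
  (forall l m, inc Q l -> inc Q m -> f l = f m -> l = m) /\
  (forall l', inc Q' l' -> exists l, inc Q l /\ f l = l') /\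
  (forall a b c, inc Q a -> inc Q b -> inc Q c ->
     collinear_at Q a b c -> collinear_at Q' (f a) (f b) (f c)).

(* Main.v *)
Require Import Defs.
From Stdlib Require Import Classical.

Section Geo.
Variable A : affine_space.

Lemma meet_once (l m : ln A) (p q : pt A) :
  l <> m -> inc p l -> inc p m -> inc q l -> inc q m -> p = q.
Proof.
  intros Hlm H1 H2 H3 H4. destruct (classic (p = q)) as [E|E]; auto.
  exfalso; apply Hlm; eapply (ax_join_uniq A p q); eauto.
Qed.

Lemma juniq (p q : pt A) l m : p <> q -> inc p l -> inc q l -> inc p m -> inc q m -> l = m.
Proof. apply ax_join_uniq. Qed.

Lemma par_eq (l m : ln A) (p : pt A) : par l m -> inc p l -> inc p m -> l = m.
Proof. intros H1 H2 H3. apply (ax_euclid_uniq A p m l m); auto. apply ax_par_refl. Qed.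

Lemma par_s (l m : ln A) : par l m -> par m l.
Proof. apply ax_par_sym. Qed.
Lemma par_t (l m n : ln A) : par l m -> par m n -> par l n.
Proof. apply ax_par_trans. Qed.
Lemma par_r (l : ln A) : par l l.
Proof. apply ax_par_refl. Qed.

Lemma lemM (a b c x : pt A) (lab lac lbc n : ln A) :
  noncollinear a b c -> inc a lab -> inc b lab -> inc a lac -> inc c lac ->
  inc b lbc -> inc c lbc -> inc x lab -> inc x n -> par n lbc ->
  exists p, inc p n /\ inc p lac.
Proof.
  intros Hnc H1 H2 H3 H4 H5 H6 H7 H8 H9.
  destruct (classic (x = a)) as [->|Hxa].
  - exists a; auto.
  - destruct (ax_triangle A a b c a x lab lac lbc lab lac n Hnc H1 H2 H3 H4 H5 H6
      (fun e => Hxa (eq_sym e)) H1 H7 (par_r _) H3 (par_r _) H8 H9) as [p [P1 P2]].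
    exists p; auto.
Qed.


Section Plane.
Variables (x y z : pt A) (d l0 : ln A).
Hypotheses (Hnc : noncollinear x y z) (Hxd : inc x d) (Hyd : inc y d)
  (Hx0 : inc x l0) (Hz0 : inc z l0).

Definition Pl (w : pt A) := exists m r, inc w m /\ par m d /\ inc r m /\ inc r l0.

Lemma dl_eq (w : pt A) m1 m2 : inc w m1 -> par m1 d -> inc w m2 -> par m2 d -> m1 = m2.
Proof. intros; eapply (ax_euclid_uniq A w d); eauto. Qed.

Lemma par_dd m1 m2 : par m1 d -> par m2 d -> par m1 m2.
Proof. intros; eapply par_t; eauto using par_s. Qed.

Lemma S1 (u v w : pt A) g : u <> v -> Pl u -> Pl v -> inc u g -> inc v g -> inc w g -> Pl w.
Proof.
  intros Huv [mu [r1 [Hu1 [Hu2 [Hu3 Hu4]]]]] [mv [r2 [Hv1 [Hv2 [Hv3 Hv4]]]]] Hug Hvg Hwg.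
  destruct (classic (par g d)) as [Hgd|Hgd].
  - exists g, r1. assert (g = mu) by (apply (dl_eq u); auto). subst. tauto.
  - destruct (ax_euclid A w d) as [mw [Hw1 Hw2]].
    destruct (classic (exists a, inc a g /\ inc a l0)) as [[a [Ha1 Ha2]]|Hno].
    + destruct (classic (g = l0)) as [->|Hgl].
      * exists mw, w. tauto.
      * assert (Hc: exists c mc rc, inc c g /\ c <> a /\ inc c mc /\ par mc d /\ inc rc mc /\ inc rc l0).
        { destruct (classic (u = a)) as [->|Hua].
          - exists v, mv, r2. repeat split; auto.
          - exists u, mu, r1. repeat split; auto. }
        destruct Hc as [c [mc [rc [Hc1 [Hc2 [Hc3 [Hc4 [Hc5 Hc6]]]]]]]].
        assert (Hrc : rc <> a).
        { intro; subst rc. apply Hgd. assert (mc = g) by (eapply (juniq a c); eauto). subst; auto. }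
        assert (Hncl: noncollinear a c rc).
        { intros [L [H1 [H2 H3]]]. apply Hgl. transitivity L.
          - eapply (juniq a c); eauto.
          - eapply (juniq a rc); eauto. }
        destruct (lemM a c rc w g l0 mc mw Hncl) as [p [Hp1 Hp2]]; auto.
        { apply par_dd; auto. }
        exists mw, p. tauto.
    + assert (Hu0 : ~ inc u l0) by (intro; apply Hno; eauto).
      assert (Hv0 : ~ inc v l0) by (intro; apply Hno; eauto).
      assert (Hr12 : r1 <> r2).
      { intro; subst r2. assert (mu = mv) by (apply (dl_eq r1); auto). subst mv.
        apply Hgd. assert (g = mu) by (eapply (juniq u v); eauto). subst; auto. }
      assert (Hur2 : u <> r2) by (intro; subst; auto).
      destruct (ax_join A u r2 Hur2) as [k [Hk1 Hk2]].
      assert (Hn1 : noncollinear u v r2).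
      { intros [L [H1 [H2 H3]]]. apply Hno. exists r2. split; auto.
        assert (L = g) by (eapply (juniq u v); eauto). subst; auto. }
      destruct (lemM u v r2 w g k mv mw Hn1) as [w1 [Hw11 Hw12]]; auto.
      { apply par_dd; auto. }
      assert (Hn2 : noncollinear r2 u r1).
      { intros [L [H1 [H2 H3]]]. apply Hu0.
        assert (L = l0) by (eapply (juniq r1 r2); eauto). subst; auto. }
      destruct (lemM r2 u r1 w1 k l0 mu mw Hn2) as [p [Hp1 Hp2]]; auto.
      { apply par_dd; auto. }
      exists mw, p. tauto.
Qed.


Lemma D1 (a c rc r : pt A) g mc m :
  inc a g -> inc a l0 -> inc c g -> c <> a -> inc c mc -> par mc d -> inc rc mc -> inc rc l0 ->
  ~ par g d -> inc r l0 -> inc r m -> par m d -> exists p, inc p g /\ inc p m.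
Proof.
  intros Ha1 Ha2 Hc1 Hca Hc3 Hc4 Hc5 Hc6 Hgd Hr Hrm Hmd.
  destruct (classic (g = l0)) as [->|Hgl].
  - exists r; auto.
  - assert (Hrc : rc <> a).
    { intro; subst rc. apply Hgd. assert (mc = g) by (eapply (juniq a c); eauto). subst; auto. }
    assert (Hcrc : c <> rc).
    { intro; subst rc. apply Hca. eapply meet_once; eauto. }
    assert (Hncl: noncollinear a rc c).
    { intros [L [H1 [H2 H3]]]. apply Hgl. transitivity L.
      - eapply (juniq a c); eauto.
      - eapply (juniq a rc); eauto. }
    destruct (lemM a rc c r l0 g mc m Hncl) as [p [Hp1 Hp2]]; auto.
    { apply par_dd; auto. }
    exists p; auto.
Qed.

Lemma lemD (g1 g2 r : pt A) g m : ~ par g d -> g1 <> g2 -> inc g1 g -> inc g2 g ->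
  Pl g1 -> Pl g2 -> inc r l0 -> inc r m -> par m d -> exists p, inc p g /\ inc p m.
Proof.
  intros Hgd H12 Hg1 Hg2 [m1 [s1 [A1 [A2 [A3 A4]]]]] [m2 [s2 [B1 [B2 [B3 B4]]]]] Hr Hrm Hmd.
  destruct (classic (exists a, inc a g /\ inc a l0)) as [[a [Ha1 Ha2]]|Hno].
  - destruct (classic (g1 = a)) as [->|Hna].
    + eapply (D1 a g2 s2 r g m2 m); eauto.
    + eapply (D1 a g1 s1 r g m1 m); eauto.
  - assert (Hs1 : s1 <> g2) by (intro; subst; apply Hno; eauto).
    destruct (ax_join A s1 g2 Hs1) as [h [Hh1 Hh2]].
    assert (Hhd : ~ par h d).
    { intro Hp. assert (h = m1) by (apply (dl_eq s1); auto). subst h.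
      assert (m2 = m1) by (apply (dl_eq g2); auto). subst m2.
      apply Hgd. assert (g = m1) by (eapply (juniq g1 g2); eauto). subst; auto. }
    destruct (D1 s1 g2 s2 r h m2 m) as [hr [Hr1 Hr2]]; auto.
    assert (Hncl : noncollinear g2 s1 g1).
    { intros [L [H1 [H2 H3]]]. apply Hno. exists s1. split; auto.
      assert (L = g) by (eapply (juniq g1 g2); eauto). subst; auto. }
    destruct (lemM g2 s1 g1 hr h g m1 m Hncl) as [p [Hp1 Hp2]]; auto.
    { apply par_dd; auto. }
    exists p; auto.
Qed.

Lemma two_pts (l : ln A) (p : pt A) : exists q, inc q l /\ q <> p.
Proof.
  destruct (ax_line_two A l) as [a [b [Hab [Ha Hb]]]].
  destruct (classic (a = p)) as [->|Hap]; eauto.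
Qed.

Lemma S2 (p t : pt A) g m : line_in A Pl g -> Pl p -> inc p m -> par m g -> inc t m -> Pl t.
Proof.
  intros Hg Hp Hpm Hmg Htm. unfold line_in in Hg.
  destruct (ax_line_two A g) as [g1 [g2 [H12 [Hg1 Hg2]]]].
  pose proof Hp as Hp0. destruct Hp as [mp [rp [P1 [P2 [P3 P4]]]]].
  destruct (classic (par g d)) as [Hgd|Hgd].
  - assert (m = mp) by (apply (dl_eq p); auto; eapply par_t; eauto). subst.
    exists mp, rp; auto.
  - destruct (classic (inc p g)) as [Hpg|Hpg].
    + assert (m = g) by (apply (par_eq m g p); auto). subst. apply Hg; auto.
    + destruct (classic (t = p)) as [->|Htp].
      { exists mp, rp; auto. }
      destruct (lemD g1 g2 rp g mp) as [e0 [He1 He2]]; auto.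
      destruct (two_pts g e0) as [e1 [He3 He4]].
      assert (He1p : e1 <> p) by (intro; subst; auto).
      destruct (ax_join A e1 p He1p) as [k [Hk1 Hk2]].
      destruct (ax_euclid A t d) as [mt [Ht1 Ht2]].
      assert (Hncl : noncollinear e1 e0 p).
      { intros [L [H1 [H2 H3]]]. apply Hpg.
        assert (L = g) by (eapply (juniq e1 e0); eauto). subst; auto. }
      assert (Hpt : p <> t) by auto.
      destruct (ax_triangle A e1 e0 p p t g k mp m k mt Hncl He3 He1 Hk1 Hk2 He2 P1
        Hpt Hpm Htm Hmg Hk2 (par_r _) Ht1 (par_dd _ _ Ht2 P2)) as [yy [Y1 Y2]].
      assert (Py : Pl yy) by (apply (S1 e1 p yy k); auto).
      destruct Py as [my [ry [Q1 [Q2 [Q3 Q4]]]]].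
      assert (my = mt) by (apply (dl_eq yy); auto). subst.
      exists mt, ry; auto.
Qed.


Lemma l0_nd : ~ par l0 d.
Proof.
  intro H. assert (l0 = d) by (apply (par_eq l0 d x); auto). subst.
  apply Hnc. exists d; auto.
Qed.

Lemma S3 (g h : ln A) : line_in A Pl g -> line_in A Pl h ->
  ~ (exists p, inc p g /\ inc p h) -> par g h.
Proof.
  intros Hg Hh Hdis. unfold line_in in Hg, Hh.
  destruct (ax_line_two A g) as [g1 [g2 [G12 [G1 G2]]]].
  destruct (ax_line_two A h) as [h1 [h2 [H12 [H1 H2]]]].
  destruct (classic (par g d)) as [Hgd|Hgd]; destruct (classic (par h d)) as [Hhd|Hhd].
  - eapply par_t; eauto using par_s.
  - exfalso. destruct (Hg g1 G1) as [m1 [r1 [A1 [A2 [A3 A4]]]]].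
    assert (g = m1) by (apply (dl_eq g1); auto). subst m1.
    destruct (lemD h1 h2 r1 h g) as [p [P1 P2]]; auto. apply Hdis; eauto.
  - exfalso. destruct (Hh h1 H1) as [m1 [r1 [A1 [A2 [A3 A4]]]]].
    assert (h = m1) by (apply (dl_eq h1); auto). subst m1.
    destruct (lemD g1 g2 r1 g h) as [p [P1 P2]]; auto. apply Hdis; eauto.
  - destruct (ax_euclid A h1 g) as [m [M1 M2]].
    destruct (classic (m = h)) as [->|Hmh]; [apply par_s; auto|].
    exfalso.
    assert (Hm : forall t, inc t m -> Pl t) by (intros t Ht; apply (S2 h1 t g m); auto).
    destruct (Hh h1 H1) as [mp [rp [P1 [P2 [P3 P4]]]]].
    destruct (ax_line_two A l0) as [q1 [q2 [Q12 [Q1 Q2]]]].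
    assert (Hr : exists r, inc r l0 /\ ~ inc r mp).
    { destruct (classic (inc q1 mp)) as [Hq1|Hq1]; [|eauto].
      destruct (classic (inc q2 mp)) as [Hq2|Hq2]; [|eauto].
      exfalso. apply l0_nd. assert (l0 = mp) by (apply (juniq q1 q2); auto). subst; auto. }
    destruct Hr as [r [R1 R2]].
    destruct (ax_euclid A r d) as [mr [MR1 MR2]].
    assert (Hpr : ~ inc h1 mr).
    { intro. assert (mr = mp) by (apply (dl_eq h1); auto). subst; auto. }
    assert (Hmd : ~ par m d) by (intro; apply Hgd; eapply par_t; eauto using par_s).
    destruct (ax_line_two A m) as [m1 [m2 [N12 [N1 N2]]]].
    destruct (lemD m1 m2 r m mr) as [b [B1 B2]]; auto.
    destruct (lemD h1 h2 r h mr) as [c [C1 C2]]; auto.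
    destruct (lemD g1 g2 r g mr) as [e [E1 E2]]; auto.
    assert (Hbc : b <> c).
    { intro; subst c. apply Hmh. apply (juniq h1 b); auto. intro; subst; auto. }
    assert (Hce : c <> e) by (intro; subst; apply Hdis; eauto).
    assert (Hncl : noncollinear c b h1).
    { intros [L [K1 [K2 K3]]]. apply Hpr. assert (L = mr) by (apply (juniq c b); auto).
      subst; auto. }
    destruct (ax_triangle A c b h1 c e mr h m mr h g Hncl C2 B2 C1 H1 B1 M1 Hce C2 E2
      (par_r _) C1 (par_r _) E1 (par_s _ _ M2)) as [p [K1 K2]].
    apply Hdis; eauto.
Qed.

Lemma Pl_sub : subspace A Pl.
Proof.
  split.
  - intros p q l Hpq Hp Hq Hpl Hql t Ht. apply (S1 p q t l); auto.
  - intros l m p Hl Hp Hpm Hml t Ht. apply (S2 p t l m); auto.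
Qed.

Lemma Pl_x : Pl x.
Proof. exists d, x; repeat split; auto using par_r. Qed.
Lemma Pl_y : Pl y.
Proof. exists d, x; repeat split; auto using par_r. Qed.
Lemma Pl_z : Pl z.
Proof. destruct (ax_euclid A z d) as [m [M1 M2]]. exists m, z; auto. Qed.

End Plane.

Lemma span_sub (X : pt A -> Prop) : subspace A (in_span A X).
Proof.
  split.
  - intros p q l Hpq Hp Hq Hpl Hql t Ht S HS HX.
    apply ((proj1 HS) p q l Hpq (Hp S HS HX) (Hq S HS HX) Hpl Hql t Ht).
  - intros l m p Hl Hp Hpm Hml t Ht S HS HX.
    apply ((proj2 HS) l m p (fun u Hu => Hl u Hu S HS HX) (Hp S HS HX) Hpm Hml t Ht).
Qed.

Lemma span_in (X : pt A -> Prop) p : X p -> in_span A X p.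
Proof. intros Hp S HS HX. auto. Qed.

Lemma all_line (Hne : exists l : ln A, True) (r : pt A) : exists l, inc r l.
Proof.
  destruct Hne as [l _]. destruct (ax_line_two A l) as [a [b [Hab [Ha Hb]]]].
  destruct (classic (r = a)) as [->|Hra]; eauto.
  destruct (ax_join A r a Hra) as [m [M1 M2]]; eauto.
Qed.

Section Ne.
Hypothesis Hall : forall r : pt A, exists l, inc r l.

Lemma nc_dist (a b c : pt A) : noncollinear a b c -> a <> b /\ a <> c /\ b <> c.
Proof.
  intros Hn. repeat split; intro E; subst; apply Hn.
  - destruct (classic (b = c)) as [->|Hbc].
    + destruct (Hall c) as [l Hl]; eauto.
    + destruct (ax_join A b c Hbc) as [l [L1 L2]]; eauto.
  - destruct (classic (c = b)) as [->|Hbc].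
    + destruct (Hall b) as [l Hl]; eauto.
    + destruct (ax_join A c b Hbc) as [l [L1 L2]]; eauto.
  - destruct (classic (a = c)) as [->|Hbc].
    + destruct (Hall c) as [l Hl]; eauto.
    + destruct (ax_join A a c Hbc) as [l [L1 L2]]; eauto.
Qed.

Lemma off_line (l : ln A) : exists q, ~ inc q l.
Proof.
  destruct (ax_three A) as [a [b [c Hn]]].
  destruct (classic (inc a l)); [|eauto]. destruct (classic (inc b l)); [|eauto].
  destruct (classic (inc c l)); [|eauto]. exfalso; apply Hn; eauto.
Qed.

Lemma second_line (p : pt A) l : inc p l -> exists m, inc p m /\ m <> l.
Proof.
  intros Hp. destruct (off_line l) as [q Hq].
  assert (p <> q) by (intro; subst; auto).
  destruct (ax_join A p q H) as [m [M1 M2]]. exists m; split; auto.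
  intro; subst; auto.
Qed.

Lemma line_not_through (X : pt A) : exists l, ~ inc X l.
Proof.
  destruct (Hall X) as [l Hl]. destruct (off_line l) as [q Hq].
  destruct (ax_euclid A q l) as [m [M1 M2]]. exists m. intro HX.
  assert (m = l) by (apply (par_eq m l X); auto). subst; auto.
Qed.

Lemma plane_par (a b c : pt A) g h : noncollinear a b c ->
  line_in A (in_span A (triple A a b c)) g -> line_in A (in_span A (triple A a b c)) h ->
  ~ (exists p, inc p g /\ inc p h) -> par g h.
Proof.
  intros Hn Hg Hh Hdis. destruct (nc_dist a b c Hn) as [Hab [Hac Hbc]].
  destruct (ax_join A a b Hab) as [d [D1 D2]].
  destruct (ax_join A a c Hac) as [l0 [L1 L2]].
  assert (Hsub : forall p, in_span A (triple A a b c) p -> Pl d l0 p).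
  { intros p Hp. apply Hp. apply Pl_sub; auto.
    intros u [E | [E | E]]; subst u; [eapply Pl_x| eapply (Pl_y a) | eapply Pl_z]; eauto. }
  apply (S3 a b c d l0); auto; intros t Ht; apply Hsub; auto.
Qed.


Definition three (l : ln A) := exists p q r, inc p l /\ inc q l /\ inc r l /\ p <> q /\ p <> r /\ q <> r.

Lemma three_T1 (l m : ln A) (O : pt A) : l <> m -> inc O l -> inc O m -> three l -> three m.
Proof.
  intros Hlm HOl HOm [p1 [p2 [p3 [Q1 [Q2 [Q3 [N12 [N13 N23]]]]]]]].
  assert (Hpr : exists p r, inc p l /\ inc r l /\ p <> O /\ r <> O /\ p <> r).
  { destruct (classic (p1 = O)) as [->|E1].
    - exists p2, p3; repeat split; auto.
    - destruct (classic (p2 = O)) as [->|E2].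
      + exists p1, p3; repeat split; auto.
      + exists p1, p2; repeat split; auto. }
  destruct Hpr as [p [r [Hp [Hr [HpO [HrO Hpr]]]]]].
  destruct (two_pts m O) as [s [Hs HsO]].
  assert (Hsl : ~ inc s l) by (intro; apply HsO; eapply meet_once; eauto).
  assert (Hps : p <> s) by (intro; subst; auto).
  destruct (ax_join A p s Hps) as [k [K1 K2]].
  destruct (ax_euclid A r k) as [n [N1 N2]].
  assert (Hnc : noncollinear O p s).
  { intros [L [H1 [H2 H3]]]. apply Hsl. assert (L = l) by (apply (juniq O p); auto). subst; auto. }
  destruct (lemM O p s r l m k n Hnc) as [t [T1 T2]]; auto.
  assert (HtO : t <> O).
  { intro; subst t. assert (n = l) by (apply (juniq O r); auto). subst n.
    assert (l = k) by (apply (par_eq l k p); auto). subst; auto. }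
  assert (Hts : t <> s).
  { intro; subst t. assert (n = k) by (apply (par_eq n k s); auto). subst n.
    assert (k = l) by (apply (juniq p r); auto). subst; auto. }
  exists O, s, t; repeat split; auto.
Qed.

Lemma three_T (l b : ln A) : three l -> three b.
Proof.
  intros H3.
  destruct (classic (l = b)) as [->|Hlb]; auto.
  destruct (classic (exists O, inc O l /\ inc O b)) as [[O [O1 O2]]|Hno].
  - apply (three_T1 l b O); auto.
  - destruct (ax_line_two A l) as [p [_ [_ [Hp _]]]].
    destruct (ax_line_two A b) as [r [_ [_ [Hr _]]]].
    assert (Hpr : p <> r) by (intro; subst; eauto).
    destruct (ax_join A p r Hpr) as [k [K1 K2]].
    apply (three_T1 k b r); auto.
    + intro; subst; eauto.
    + apply (three_T1 l k p); auto. intro; subst; eauto.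
Qed.


Lemma coll_two (Q : pt A) u v : inc Q u -> inc Q v ->
  exists E, plane A E /\ E Q /\ line_in A E u /\ line_in A E v.
Proof.
  intros Hu Hv.
  destruct (two_pts u Q) as [U [HU HUQ]].
  assert (HV : exists V, V <> Q /\ ~ inc V u /\ (v = u \/ inc V v)).
  { destruct (classic (v = u)) as [->|Hvu].
    - destruct (off_line u) as [V HV]. exists V. split; [intro; subst; auto|]. auto.
    - destruct (two_pts v Q) as [V [HV HVQ]]. exists V. split; auto. split; auto.
      intro HVu. apply HVQ. eapply meet_once; eauto. }
  destruct HV as [V [HV2 [HV3 HV4]]].
  assert (Hn : noncollinear Q U V).
  { intros [L [H1 [H2 H3]]]. apply HV3. assert (L = u) by (apply (juniq Q U); auto). subst; auto. }
  assert (Hu' : line_in A (in_span A (triple A Q U V)) u).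
  { intros t Ht. apply ((proj1 (span_sub _)) Q U u (fun e => HUQ (eq_sym e))); auto;
      apply span_in; unfold triple; auto. }
  exists (in_span A (triple A Q U V)). split; [|split; [|split]].
  - exists Q, U, V. split; auto. intro; tauto.
  - apply span_in. left; auto.
  - auto.
  - destruct HV4 as [->|Hvu]; auto.
    intros t Ht. apply ((proj1 (span_sub _)) Q V v (fun e => HV2 (eq_sym e))); auto;
        apply span_in; unfold triple; auto.
Qed.

End Ne.

Lemma exists_three : ~ order_two A -> exists l, three l.
Proof.
  intros H. apply NNPP; intro Hn. apply H. intro l.
  destruct (ax_line_two A l) as [p [q [Hpq [Hp Hq]]]].
  exists p, q; repeat split; auto. intros r Hr.
  apply NNPP; intro Hr'. apply Hn. exists l, p, q, r. repeat split; auto;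
  intro; subst; tauto.
Qed.

End Geo.


Theorem theorem3 (A A' : affine_space) (phi : ln A -> ln A') (lam : pt A -> pt A')
  (hdim' : dim_ge3 A')
  (hinj : forall a b, phi a = phi b -> a = b)
  (hsurj : forall b', exists a, phi a = b')
  (hrel : forall a b, related a b -> related (phi a) (phi b))
  (hlam : forall a b p, adjacent a b -> inc p a -> inc p b ->
            inc (lam p) (phi a) /\ inc (lam p) (phi b)) :
  dim_ge3 A /\
  (~ order_two A ->
     forall Q : pt A, semicollineation_at A A' phi Q (lam Q)).
Proof.
  pose proof hdim' as HD. destruct HD as [a' [b' [c' [d' [Hn' Hd'']]]]].
  assert (Hda : d' <> a') by (intro; subst; apply Hd''; apply span_in; left; auto).
  assert (Hne' : exists l : ln A', True).
  { destruct (ax_join A' d' a' Hda) as [l _]. exists l; auto. }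
  pose proof (all_line A' Hne') as Hall'.
  assert (Hne : exists l : ln A, True).
  { destruct Hne' as [l' _]. destruct (hsurj l') as [l _]. exists l; auto. }
  pose proof (all_line A Hne) as Hall.
  assert (lam_on : forall p l, inc p l -> inc (lam p) (phi l)).
  { intros p l Hp. destruct (second_line A p l Hp) as [m [M1 M2]].
    apply (hlam l m p); auto. split; [exists p; auto| auto]. }
  assert (lam_inj : forall p q, lam p = lam q -> p = q).
  { intros p q E. destruct (classic (p = q)) as [|Hpq]; auto. exfalso.
    destruct (ax_join A p q Hpq) as [a [Ha1 Ha2]].
    assert (Hoff : forall s, ~ inc s a -> lam s = lam p).
    { intros s Hs. assert (Hps : p <> s) by (intro; subst; auto).
      assert (Hqs : q <> s) by (intro; subst; auto).
      destruct (ax_join A p s Hps) as [ps [P1 P2]].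
      destruct (ax_join A q s Hqs) as [qs [Q1 Q2]].
      assert (Hne2 : ps <> qs).
      { intro; subst qs. apply Hs. assert (ps = a) by (apply (juniq A p q); auto). subst; auto. }
      apply NNPP; intro Hl. apply Hne2, hinj.
      apply (juniq A' (lam s) (lam p)); auto. rewrite E; auto. }
    assert (HX : forall t, lam t = lam p).
    { intros t. destruct (classic (inc t a)) as [Ht|Ht]; [|auto].
      destruct (off_line A a) as [s Hs].
      assert (Hst : s <> t) by (intro; subst; auto).
      destruct (ax_join A s t Hst) as [st [S1 S2]].
      apply NNPP; intro Hl.
      assert (st = a).
      { apply hinj. apply (juniq A' (lam t) (lam p)); auto. rewrite <- (Hoff s Hs); auto. }
      subst; auto. }
    destruct (line_not_through A' Hall' (lam p)) as [l' Hl'].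
    destruct (hsurj l') as [l <-]. destruct (ax_line_two A l) as [t [_ [_ [Ht _]]]].
    apply Hl'. rewrite <- (HX t). auto. }
  split.
  -
    apply NNPP; intro Hnd.
    destruct (ax_three A) as [x [y [z Hxyz]]].
    assert (Hevery : forall w, in_span A (triple A x y z) w).
    { intro w; apply NNPP; intro; apply Hnd; exists x, y, z, w; auto. }
    destruct (nc_dist A' Hall' a' b' c' Hn') as [Hab [Hac Hbc]].
    destruct (ax_join A' a' b' Hab) as [L1 [L1a L1b]].
    destruct (ax_euclid A' c' L1) as [L6 [L6c L6p]].
    destruct (ax_euclid A' d' L1) as [L3 [L3d L3p]].
    assert (HL1 : line_in A' (in_span A' (triple A' a' b' c')) L1).
    { intros t Ht. apply ((proj1 (span_sub A' _)) a' b' L1 Hab); auto;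
      apply span_in; unfold triple; auto. }
    assert (HL6 : line_in A' (in_span A' (triple A' a' b' c')) L6).
    { apply ((proj2 (span_sub A' _)) L1 L6 c'); auto. apply span_in; unfold triple; auto. }
    assert (Hc1 : ~ inc c' L1) by (intro; apply Hn'; eauto).
    assert (Hd1 : ~ inc d' L1) by (intro; apply Hd''; auto).
    assert (Hd6 : ~ inc d' L6) by (intro; apply Hd''; auto).
    assert (dis16 : ~ exists p, inc p L1 /\ inc p L6).
    { intros [p [P1 P2]]. assert (L6 = L1) by (apply (par_eq A' L6 L1 p); auto). subst; auto. }
    assert (dis13 : ~ exists p, inc p L1 /\ inc p L3).
    { intros [p [P1 P2]]. assert (L3 = L1) by (apply (par_eq A' L3 L1 p); auto). subst; auto. }
    assert (dis63 : ~ exists p, inc p L6 /\ inc p L3).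
    { intros [p [P1 P2]]. assert (L3 = L6).
      { apply (par_eq A' L3 L6 p); auto. eapply par_t; eauto using par_s. }
      subst; auto. }
    destruct (hsurj L1) as [u1 U1]. destruct (hsurj L6) as [u6 U6].
    destruct (hsurj L3) as [u3 U3]. subst L1 L6 L3.
    assert (nr16 : ~ exists p, inc p u1 /\ inc p u6).
    { intro H. apply dis16. apply hrel; auto. }
    assert (nr13 : ~ exists p, inc p u1 /\ inc p u3).
    { intro H. apply dis13. apply hrel; auto. }
    assert (Hsp : forall l, line_in A (in_span A (triple A x y z)) l) by (intros l t _; auto).
    assert (P16 : par u1 u6) by (apply (plane_par A Hall x y z); auto).
    assert (P13 : par u1 u3) by (apply (plane_par A Hall x y z); auto).
    destruct (ax_line_two A u1) as [p1 [_ [_ [Hp1 _]]]].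
    destruct (second_line A p1 u1 Hp1) as [g [G1 G2]].
    assert (Hg1 : ~ par g u1) by (intro H; apply G2; apply (par_eq A g u1 p1); auto).
    assert (M6 : exists p, inc p g /\ inc p u6).
    { apply NNPP; intro H. apply Hg1.
      assert (par g u6) by (apply (plane_par A Hall x y z); auto).
      eapply par_t; eauto using par_s. }
    assert (M3 : exists p, inc p g /\ inc p u3).
    { apply NNPP; intro H. apply Hg1.
      assert (par g u3) by (apply (plane_par A Hall x y z); auto).
      eapply par_t; eauto using par_s. }
    destruct (hrel g u1) as [q1 [Q1a Q1b]]; [exists p1; auto|].
    destruct (hrel g u6 M6) as [q6 [Q6a Q6b]].
    destruct (hrel g u3 M3) as [q3 [Q3a Q3b]].
    assert (Hq16 : q1 <> q6) by (intro; subst; apply dis16; eauto).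
    assert (Hg : line_in A' (in_span A' (triple A' a' b' c')) (phi g)).
    { intros t Ht. apply ((proj1 (span_sub A' _)) q1 q6 (phi g) Hq16); auto. }
    apply Hd''.
    apply ((proj2 (span_sub A' _)) (phi u1) (phi u3) q3); auto.
  - intros Hno2 Q. split; [|split; [|split]].
    + intros l Hl; apply lam_on; auto.
    + intros l m _ _ E; apply hinj; auto.
    + intros l' Hl'. destruct (hsurj l') as [a <-].
      destruct (classic (inc Q a)) as [HQa|HQa]; [eauto|exfalso].
      destruct (ax_line_two A a) as [P [_ [_ [HP _]]]].
      assert (HPQ : Q <> P) by (intro; subst; auto).
      destruct (ax_join A Q P HPQ) as [b [B1 B2]].
      assert (Hlam : lam P <> lam Q) by (intro E; apply HPQ; symmetry; auto).
      assert (a = b).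
      { apply hinj. apply (juniq A' (lam P) (lam Q)); auto. }
      subst; auto.
    + intros a b c Ha Hb Hc [E [HE [HEQ [HaE [HbE HcE]]]]].
      destruct (classic (a = b)) as [<-|Hab].
      { destruct (coll_two A' (lam Q) (phi a) (phi c)) as [E' [X1 [X2 [X3 X4]]]]; auto.
        exists E'; auto. }
      destruct (classic (a = c)) as [<-|Hac].
      { destruct (coll_two A' (lam Q) (phi a) (phi b)) as [E' [X1 [X2 [X3 X4]]]]; auto.
        exists E'; auto. }
      destruct (classic (b = c)) as [<-|Hbc].
      { destruct (coll_two A' (lam Q) (phi a) (phi b)) as [E' [X1 [X2 [X3 X4]]]]; auto.
        exists E'; auto. }
      destruct (exists_three A Hno2) as [l3 Hl3].
      pose proof (three_T A l3 b Hl3) as Hb3.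
      destruct (two_pts A a Q) as [P [HP HPQ]].
      assert (HR12 : exists R1 R2, inc R1 b /\ inc R2 b /\ R1 <> Q /\ R2 <> Q /\ R1 <> R2).
      { destruct Hb3 as [p1 [p2 [p3 [Q1 [Q2 [Q3 [N12 [N13 N23]]]]]]]].
        destruct (classic (p1 = Q)) as [->|E1].
        - exists p2, p3; repeat split; auto.
        - destruct (classic (p2 = Q)) as [->|E2].
          + exists p1, p3; repeat split; auto.
          + exists p1, p2; repeat split; auto. }
      destruct HR12 as [R1 [R2 [HR1 [HR2 [HR1Q [HR2Q HR12]]]]]].
      assert (HPb : ~ inc P b) by (intro; apply HPQ; apply (meet_once A a b); auto).
      assert (HPR1 : P <> R1) by (intro; subst; auto).
      assert (HPR2 : P <> R2) by (intro; subst; auto).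
      destruct (ax_join A P R1 HPR1) as [d1 [D1a D1b]].
      destruct (ax_join A P R2 HPR2) as [d2 [D2a D2b]].
      assert (HRd : exists R d, inc R b /\ R <> Q /\ inc P d /\ inc R d /\ P <> R /\ ~ par d c).
      { destruct (classic (par d1 c)) as [H1|H1]; [|exists R1, d1; repeat split; auto].
        destruct (classic (par d2 c)) as [H2|H2]; [|exists R2, d2; repeat split; auto].
        exfalso. assert (d1 = d2) by (apply (ax_euclid_uniq A P c); auto). subst d2.
        assert (d1 = b) by (apply (juniq A R1 R2); auto). subst; auto. }
      destruct HRd as [R [d [HRb [HRQ [HPd [HRd [HPR Hdc]]]]]]].
      destruct HE as [x [y [z [Hxyz HEiff]]]].
      assert (HEs : forall l, line_in A E l -> line_in A (in_span A (triple A x y z)) l).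
      { intros l Hl t Ht. apply HEiff. auto. }
      assert (Hds : line_in A (in_span A (triple A x y z)) d).
      { intros t Ht. apply ((proj1 (span_sub A _)) P R d HPR); auto; apply HEiff; auto. }
      assert (HS : exists S, inc S d /\ inc S c).
      { apply NNPP; intro H. apply Hdc. apply (plane_par A Hall x y z); auto. }
      destruct HS as [S [HSd HSc]].
      assert (HRa : ~ inc R a) by (intro; apply HRQ; apply (meet_once A a b); auto).
      assert (HSQ : S <> Q).
      { intro; subst S. assert (d = a) by (apply (juniq A P Q); auto). subst; auto. }
      assert (N1 : lam P <> lam Q) by (intro E1; apply HPQ; auto).
      assert (N2 : lam R <> lam Q) by (intro E1; apply HRQ; auto).
      assert (N3 : lam S <> lam Q) by (intro E1; apply HSQ; auto).
      assert (N4 : lam P <> lam R) by (intro E1; apply HPR; auto).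
      assert (Hnc : noncollinear (lam Q) (lam P) (lam R)).
      { intros [L [K1 [K2 K3]]]. apply Hab. apply hinj.
        transitivity L.
        - symmetry; apply (juniq A' (lam Q) (lam P)); auto.
        - apply (juniq A' (lam Q) (lam R)); auto. }
      set (E' := in_span A' (triple A' (lam Q) (lam P) (lam R))).
      assert (sp : forall u v l, u <> v -> E' u -> E' v -> inc u l -> inc v l -> line_in A' E' l).
      { intros u v l Huv Hu Hv Hul Hvl t Ht. apply ((proj1 (span_sub A' _)) u v l Huv); auto. }
      assert (EQ : E' (lam Q)) by (apply span_in; left; auto).
      assert (EP : E' (lam P)) by (apply span_in; right; left; auto).
      assert (ER : E' (lam R)) by (apply span_in; right; right; auto).
      assert (Ed : line_in A' E' (phi d)) by (apply (sp (lam P) (lam R)); auto).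
      exists E'. split; [|split; [|split; [|split]]].
      * exists (lam Q), (lam P), (lam R). split; auto. intro; tauto.
      * auto.
      * apply (sp (lam Q) (lam P)); auto.
      * apply (sp (lam Q) (lam R)); auto.
      * apply (sp (lam Q) (lam S)); auto.
Qed.
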